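(* Let $X$ be a real normed linear space with zero $\theta$, $\dim X>1$, whose norm is strictly convex. Let $f\colon X\to X$ be a motion such that there exists $x\in X$ with $\|f(x)\|\leqslant\|x\|$ and $\|f(-x)\|\leqslant\|x\|$. Then the shift component of $f$ is trivial, i.e. $f(\theta)=\theta$.
   Context: A motion of $X$ is a surjective map $f\colon X\to X$ with $\|f(x)-f(y)\|=\|x-y\|$ for all $x,y$. Every motion decomposes uniquely as $f=h\circ g$ with $g$ a motion fixing $\theta$ and $h(x)=x+a$ a translation (here $a=f(\theta)$); $h$ is called the shift component, and it is trivial when $h$ is the identity, i.e. $a=\theta$. The norm is strictly convex if for all $x\ne y$ with $\|x\|=\|y\|=1$ and all $\lambda\in(0,1)$ one has $\|\lambda x+(1-\lambda)y\|<1$. *)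

(* Defs.v *)
From HB Require Import structures.
From mathcomp Require Import all_boot all_order all_algebra.
From mathcomp Require Import all_classical all_reals.
From mathcomp Require Import topology normedtype.
Set Implicit Arguments. Unset Strict Implicit. Unset Printing Implicit Defensive.
Import Order.TTheory GRing.Theory Num.Theory.
Local Open Scope ring_scope.

Definition dim_gt1 (R : realType) (X : normedModType R) : Prop :=
  exists u v : X, forall a b : R, a *: u + b *: v = 0 -> a = 0 /\ b = 0.

Definition strictly_convex (R : realType) (X : normedModType R) : Prop :=
  forall x y : X, x != y -> `|x| = 1 -> `|y| = 1 ->
    forall l : R, 0 < l < 1 -> `|l *: x + (1 - l) *: y| < 1.

Definition motion (R : realType) (X : normedModType R) (f : X -> X) : Prop :=
  (forall y : X, exists x : X, f x = y) /\
  (forall x y : X, `|f x - f y| = `|x - y|).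

(* Shift component h(x) = x + f(0) is trivial iff f(0) = 0. *)
Definition shift_trivial (R : realType) (X : normedModType R) (f : X -> X) : Prop :=
  f 0 = 0.

(* Main.v *)
Require Import Defs.
From HB Require Import structures.
From mathcomp Require Import all_boot all_order all_algebra.
From mathcomp Require Import all_classical all_reals.
From mathcomp Require Import topology normedtype.
From mathcomp Require Import ring lra.
Import Order.TTheory GRing.Theory Num.Theory.
Local Open Scope ring_scope.

Lemma midA (R : realType) (X : normedModType R) (u v : X) (r : R) :
  strictly_convex X -> `|u| = r -> `|v| = r -> `|u + v| = r + r -> u = v.
Proof.
move=> sc hu hv huv.
have r0 : 0 <= r by rewrite -hu.
have [rz|rpos] : r = 0 \/ 0 < r.
  by move: r0; rewrite le_eqVlt => /orP [/eqP ->|->]; [left|right].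
  move: hu hv; rewrite rz => /normr0_eq0 -> /normr0_eq0 -> //.
case: (eqVneq u v) => // neq.
have rne : r != 0 by rewrite gt_eqF.
have hinv : 0 < r^-1 by rewrite invr_gt0.
have n' : r^-1 *: u != r^-1 *: v.
  apply: contra neq => /eqP e.
  by rewrite -[u](scalerKV rne) -[v](scalerKV rne) e.
have nu : `|r^-1 *: u| = 1 by rewrite normrZ hu gtr0_norm // mulVf.
have nv : `|r^-1 *: v| = 1 by rewrite normrZ hv gtr0_norm // mulVf.
have hl : (0 < (2^-1 : R)) && ((2^-1 : R) < 1).
  by rewrite invr_gt0 ltr0n /= invf_lt1 ?ltr0n ?ltr1n.
have := sc _ _ n' nu nv _ hl.
have -> : 2^-1 *: (r^-1 *: u) + (1 - 2^-1) *: (r^-1 *: v) = (2^-1 * r^-1) *: (u + v).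
  have -> : (1 - 2^-1 : R) = 2^-1 by field.
  by rewrite !scalerA scalerDr.
rewrite normrZ huv gtr0_norm; last by rewrite mulr_gt0 // invr_gt0 ltr0n.
have -> : 2^-1 * r^-1 * (r + r) = 1 by field.
by rewrite ltxx.
Qed.

Theorem lemma4 (R : realType) (X : normedModType R) (f : X -> X) :
  dim_gt1 X -> strictly_convex X -> motion f ->
  (exists x : X, `|f x| <= `|x| /\ `|f (- x)| <= `|x|) ->
  shift_trivial f.
Proof.
move=> _ sc [_ iso] [x [h1 h2]].
have hxx : `|x + x| = `|x| + `|x|.
  by rewrite -mulr2n -scaler_nat normrZ normr_nat mulr_natl mulr2n.
have e1 : f 0 - f x = f (- x) - f 0.
  apply: (@midA R X _ _ `|x|) => //.
  - by rewrite iso sub0r normrN.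
  - by rewrite iso subr0 normrN.
  - have -> : f 0 - f x + (f (- x) - f 0) = f (- x) - f x.
      by rewrite addrC addrA subrK.
    by rewrite iso -opprD normrN hxx.
have hpq : `|f x - f (- x)| = `|x| + `|x| by rewrite iso opprK hxx.
have tri := ler_normB (f x) (f (- x)).
have e2 : f x = - f (- x).
  apply: (@midA R X _ _ `|x|) => //.
  - lra.
  - rewrite normrN; lra.
have e3 : f 0 + f 0 = 0.
  move: e1; rewrite e2 opprK => e1.
  have -> : f 0 + f 0 = (f 0 + f (- x)) - (f (- x) - f 0).
    by rewrite opprB addrACA subrr addr0.
  by rewrite e1 subrr.
rewrite /shift_trivial.
move: e3; rewrite -mulr2n -scaler_nat => /eqP; rewrite scaler_eq0 => /orP [|/eqP //].
by rewrite pnatr_eq0.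
Qed.
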